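(* Let $n\ge 4$ and let $A=\{a_1,\dots,a_m\}$ with $a_1<a_2<\dots<a_m$, and let $s,t$ be any two distinct vertices of $QJ(n,A)$. (i) If $1\le a_1<\dots<a_m<n-1$, then for every $1\le i<m$ and any two distinct vertices $u,w$ of level $i$ (the copy of $J(n,a_i)$), there exist distinct vertices $u',w'$ of level $i+1$ (the copy of $J(n,a_{i+1})$), neither equal to $s$ or $t$, such that $u'$ is adjacent to $u$ and $w'$ is adjacent to $w$. (ii) If $1<a_1<\dots<a_m\le n-1$, then for every $1<i\le m$ and any two distinct vertices $u,w$ of level $i$, there exist distinct vertices $u',w'$ of level $i-1$, neither equal to $s$ or $t$, such that $u'$ is adjacent to $u$ and $w'$ is adjacent to $w$. (iii) If $A=\{1,n-1\}$, then any two distinct vertices of level 1 have distinct neighbours (respectively) in level 2 avoiding $\{s,t\}$, and any two distinct vertices of level 2 have distinct neighbours (respectively) in level 1 avoiding $\{s,t\}$.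
   Context: Let $[n]=\{1,\dots,n\}$. The Johnson graph $J(n,k)$ has as vertices the $k$-subsets of $[n]$, two being adjacent iff they share exactly $k-1$ elements. For a nonempty $A=\{a_1<a_2<\dots<a_m\}\subseteq[n]$, the graph $QJ(n,A)$ is formed by taking, for each $i$, a copy of $J(n,a_i)$ (called level $i$), and additionally joining a vertex $u$ of level $i$ to a vertex $v$ of level $i+1$ whenever $u\subseteq v$ (for $1\le i<m$); there are no other edges. *)

(* Defs.v *)
From mathcomp Require Import all_boot.
Set Implicit Arguments. Unset Strict Implicit. Unset Printing Implicit Defensive.

(* The ground set [n] = {1,...,n} is represented by 'I_n = {0,...,n-1}.
   A = {a_1 < ... < a_m} is represented by the strictly increasing
   sequence a = [:: a_1; ...; a_m]; level i (1-based in the paper) is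
   index i-1 (0-based) here. *)

Definition valid_A (n : nat) (a : seq nat) : bool :=
  [&& a != [::], sorted ltn a & all (fun x => (1 <= x) && (x <= n)) a].

Definition qj_vertex (n : nat) (a : seq nat) (v : nat * {set 'I_n}) : bool :=
  (v.1 < size a) && (#|v.2| == nth 0 a v.1).

Definition qj_adj (n : nat) (a : seq nat) (u v : nat * {set 'I_n}) : bool :=
  [&& qj_vertex a u, qj_vertex a v &
    [|| (u.1 == v.1) && (#|u.2 :&: v.2| == (nth 0 a u.1).-1),
        (v.1 == u.1.+1) && (u.2 \subset v.2)
      | (u.1 == v.1.+1) && (v.2 \subset u.2)]].

Definition distinct_nbrs_avoiding (n : nat) (a : seq nat)
    (s t : nat * {set 'I_n}) (i j : nat) : Prop :=
  forall u w : {set 'I_n},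
    qj_vertex a (i, u) -> qj_vertex a (i, w) -> u != w ->
    exists u' w' : {set 'I_n},
      [/\ qj_vertex a (j, u'), qj_vertex a (j, w'), u' != w',
          [/\ (j, u') != s, (j, u') != t, (j, w') != s & (j, w') != t]
        & qj_adj a (i, u) (j, u') /\ qj_adj a (i, w) (j, w')].

(* Main.v *)
Require Import Defs.
From mathcomp Require Import all_boot.
From mathcomp Require Import zify.
From Stdlib Require Import Lia.
Set Implicit Arguments. Unset Strict Implicit. Unset Printing Implicit Defensive.

Lemma hall2 (T : finType) (X Y : {set T}) (b1 b2 : T) :
  3 <= #|X| -> 3 <= #|Y| -> X != Y ->
  exists x y, [/\ x \in X, y \in Y, x != y & [/\ x != b1, x != b2, y != b1 & y != b2]].
Proof.
move=> hX hY nXY.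
have big : forall Z : {set T}, 3 <= #|Z| -> 0 < #|Z :\ b1 :\ b2|.
  move=> Z hZ; move: (cardsD1 b1 Z) (cardsD1 b2 (Z :\ b1)).
  case: (b1 \in Z); case: (b2 \in _) => /= ? ?; lia.
have /card_gt0P [x xX] := big _ hX.
have /card_gt0P [y yY] := big _ hY.
move: (xX) (yY); rewrite !inE => /and3P [xb2 xb1 xX0] /and3P [yb2 yb1 yY0].
case: (boolP (Y :\ b1 :\ b2 \subset [set x])) => [sY|/subsetPn [y2 y2Y y2x]]; last first.
  move: y2Y; rewrite !inE in y2x * => /and3P [? ? ?].
  by exists x, y2; split => //; rewrite eq_sym.
case: (boolP (X :\ b1 :\ b2 \subset [set x])) => [sX|/subsetPn [x2 x2X x2x]]; last first.
  move: x2X; rewrite !inE in x2x * => /and3P [? ? ?].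
  have yx : y = x by apply/set1P; exact: (subsetP sY).
  by exists x2, y; split => //; rewrite yx.
exfalso; move/negP: nXY; apply.
have cZ : #|[set x; b1; b2]| <= 3.
  rewrite !cardsU !cards1; lia.
have sub : forall Z : {set T}, Z :\ b1 :\ b2 \subset [set x] -> Z \subset [set x; b1; b2].
  move=> Z sZ; apply/subsetP => z zZ.
  rewrite !inE; case: (eqVneq z b1) => [_|zb1]; first by rewrite orbT.
  case: (eqVneq z b2) => [_|zb2]; first by rewrite !orbT.
  rewrite !orbF; by move: (subsetP sZ z); rewrite !inE zb1 zb2 zZ => /(_ isT).
have eX : X == [set x; b1; b2] by rewrite eqEcard sub //; exact: leq_trans cZ hX.
have eY : Y == [set x; b1; b2] by rewrite eqEcard sub //; exact: leq_trans cZ hY.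
by rewrite (eqP eX) (eqP eY).
Qed.

Lemma bin_ge L K : 0 < K < L -> L <= 'C(L, K).
Proof.
elim: L K => [|L IH] K; first by case/andP => _.
case: K => [|K]; first by [].
case/andP => _ hK.
case: (ltngtP K.+1 L) => [KL|hh|<-]; last by rewrite binSn.
- rewrite binS; have := IH K.+1 KL; have : 0 < 'C(L, K) by rewrite bin_gt0 ltnW.
  lia.
- lia.
Qed.

Lemma core (T : finType) (u w : {set T}) K (b1 b2 : {set T}) :
  #|u| = #|w| -> u != w -> 0 < K < #|u| -> 3 <= #|u| ->
  exists u' w' : {set T}, [/\ u' \subset u, w' \subset w, #|u'| = K, #|w'| = K &
                 [/\ u' != w', u' != b1, u' != b2, w' != b1 & w' != b2]].
Proof.
move=> cuw nuw /andP [K0 Ku] u3.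
pose fam (z : {set T}) := [set A : {set T} | A \subset z & #|A| == K].
have cf : forall z : {set T}, #|z| = #|u| -> 3 <= #|fam z|.
  move=> z hz; rewrite cards_draws hz; apply: leq_trans u3 _; apply: bin_ge.
  by rewrite K0.
have nf : fam u != fam w.
  apply: contra nuw => /eqP ef.
  have suw : u \subset w.
    apply/subsetP => x xu.
    have : 0 < #|[set A : {set T} | A \subset u :\ x & #|A| == K.-1]|.
      rewrite cards_draws bin_gt0; move: (cardsD1 x u); rewrite xu; lia.
    case/card_gt0P => B; rewrite inE => /andP [Bu /eqP cB].
    have xB : x \notin B by apply/negP => /(subsetP Bu); rewrite !inE eqxx.
    have : x |: B \in fam u.
      rewrite inE cardsU1 xB cB; apply/andP; split; last by apply/eqP; lia.
      apply/subsetP => y; rewrite !inE => /orP [/eqP -> //|].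
      by move/(subsetP Bu); rewrite !inE => /andP [].
    rewrite ef inE => /andP [/subsetP sw _]; apply: sw; by rewrite !inE eqxx.
  by rewrite eqEcard suw cuw /=.
have [u' [w' [u'f w'f nuw' [? ? ? ?]]]] := @hall2 _ (fam u) (fam w) b1 b2 (cf u erefl) (cf w (esym cuw)) nf.
move: u'f w'f; rewrite !inE => /andP [? /eqP ?] /andP [? /eqP ?].
by exists u', w'.
Qed.

Lemma coreS (T : finType) (u w : {set T}) L (b1 b2 : {set T}) :
  #|u| = #|w| -> u != w -> #|u| < L < #|T| -> 3 <= #|T| - #|u| ->
  exists u' w' : {set T}, [/\ u \subset u', w \subset w', #|u'| = L, #|w'| = L &
                 [/\ u' != w', u' != b1, u' != b2, w' != b1 & w' != b2]].
Proof.
move=> cuw nuw /andP [uL LT] h3.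
have cCu := cardsC u; have cCw := cardsC w.
have [u'' [w'' [s1 s2 c1 c2 [n12 nb1 nb2 nb3 nb4]]]] :=
  @core T (~: u) (~: w) (#|T| - L) (~: b1) (~: b2) ltac:(lia)
    ltac:(by rewrite (inj_eq (@setC_inj T))) ltac:(apply/andP; lia) ltac:(lia).
exists (~: u''), (~: w''); split.
- by rewrite subsetC.
- by rewrite subsetC.
- have := cardsC u''; lia.
- have := cardsC w''; lia.
have hC : forall A B : {set T}, A != ~: B -> ~: A != B.
  by move=> A B; apply: contra_neq => <-; rewrite setCK.
split; rewrite ?(inj_eq (@setC_inj T)) //; exact: hC.
Qed.


Theorem lemma5 (n : nat) (a : seq nat) (s t : nat * {set 'I_n}) :
  4 <= n -> valid_A n a ->
  qj_vertex a s -> qj_vertex a t -> s != t ->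
  [/\ (all (fun x => (1 <= x) && (x < n - 1)) a ->
         forall i, i.+1 < size a -> distinct_nbrs_avoiding a s t i i.+1),
      (all (fun x => (1 < x) && (x <= n - 1)) a ->
         forall i, 0 < i < size a -> distinct_nbrs_avoiding a s t i i.-1)
    & (a = [:: 1; n - 1] ->
         distinct_nbrs_avoiding a s t 0 1 /\ distinct_nbrs_avoiding a s t 1 0)].
Proof.
move=> n4 /and3P [a0 sa ba] vs vt nst.
have nthlt : forall i, i.+1 < size a -> nth 0 a i < nth 0 a i.+1.
  move=> i hi; apply: (sorted_ltn_nth ltn_trans 0 sa) => //; rewrite inE //; exact: ltnW.
have ael : forall (P : pred nat) i, all P a -> i < size a -> P (nth 0 a i).
  by move=> P i h hi; apply: (allP h); exact: mem_nth.
have avoid : forall (j : nat) (x : {set 'I_n}) (z : nat * {set 'I_n}), x != z.2 -> (j, x) != z.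
  by move=> j x [j' y]; apply: contra_neq => -[_ ->].
split.
- move=> hall i hi u w /andP [_ /eqP cu] /andP [_ /eqP cw] nuw; rewrite /= in cu cw.
  have := ael _ i hall (ltnW hi); have := ael _ i.+1 hall hi; have kl := nthlt i hi.
  move=> /andP [_ l1] /andP [k1 _].
  have [u' [w' [su sw cu' cw' [n1 n2 n3 n4' n5]]]] :=
    @coreS _ u w (nth 0 a i.+1) s.2 t.2 (etrans cu (esym cw)) nuw
      ltac:(rewrite card_ord cu; apply/andP; lia) ltac:(rewrite card_ord cu; lia).
  exists u', w'; rewrite /qj_adj /qj_vertex /= hi (ltnW hi) cu cw cu' cw' !eqxx su sw /= ?orbT.
  by split => //; split; apply: avoid.
- move=> hall [|i] // /andP [_ hi] u w /andP [_ /eqP cu] /andP [_ /eqP cw] nuw; rewrite /= in cu cw.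
  have := ael _ i hall (ltnW hi); have := ael _ i.+1 hall hi; have kl := nthlt i hi.
  move=> /andP [l1 _] /andP [k1 _].
  have [u' [w' [su sw cu' cw' [n1 n2 n3 n4' n5]]]] :=
    @core _ u w (nth 0 a i) s.2 t.2 (etrans cu (esym cw)) nuw
      ltac:(rewrite cu; apply/andP; lia) ltac:(rewrite cu; lia).
  exists u', w'; rewrite /qj_adj /qj_vertex /= hi (ltnW hi) cu cw cu' cw' !eqxx su sw /= ?orbT.
  by split => //; split; apply: avoid.
- move=> ea; subst a; split.
  + move=> u w; rewrite /qj_vertex /= => /eqP cu /eqP cw nuw.
    have [u' [w' [su sw cu' cw' [n1 n2 n3 n4' n5]]]] :=
      @coreS _ u w (n - 1) s.2 t.2 (etrans cu (esym cw)) nuw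
        ltac:(rewrite card_ord cu; apply/andP; lia) ltac:(rewrite card_ord cu; lia).
    exists u', w'; rewrite /qj_adj /qj_vertex /= cu cw cu' cw' !eqxx su sw /= ?orbT.
    by split => //; split; apply: avoid.
  + move=> u w; rewrite /qj_vertex /= => /eqP cu /eqP cw nuw.
    have [u' [w' [su sw cu' cw' [n1 n2 n3 n4' n5]]]] :=
      @core _ u w 1 s.2 t.2 (etrans cu (esym cw)) nuw
        ltac:(rewrite cu; apply/andP; lia) ltac:(rewrite cu; lia).
    exists u', w'; rewrite /qj_adj /qj_vertex /= cu cw cu' cw' !eqxx su sw /= ?orbT.
    by split => //; split; apply: avoid.
Qed.
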